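(* Let $U=\{1,2,\dots,N\}$ be a finite population of unit labels and let $\underline{\theta}=(y_1,\dots,y_N)\in\mathbb{R}^N$ be the unknown population parameter vector, where $y_i$ is the response of unit $i$. Let $\delta_1,\dots,\delta_T$ be finitely many candidate sampling designs, and for each $k$ let $\hat\phi_{k,1},\dots,\hat\phi_{k,V_k}$ be finitely many candidate estimators accompanying $\delta_k$; the pair (design $\delta_k$, estimator $\hat\phi_{k,j}$) is called the strategy $\Lambda_{k,j}$. A strategy $\Lambda_{k,j}$ is first selected at random with probability $P(\Lambda_{k,j})$, and then an ordered sample $\underline{s}$ of unit labels (in order of selection, repeats allowed) is drawn with design $\delta_k$. Assume: (i) the probabilities $P(\Lambda_{k,j})$ do not depend on $\underline{\theta}$; (ii) every candidate design is of the conventional and/or adaptive type, i.e. for every ordered sample $\underline{s}$ and every strategy $\Lambda_{k,j}$, $P(\underline{s}\mid \underline{\theta},\Lambda_{k,j})=P(\underline{s}\mid \underline{y}_{\underline{s}},\delta_k)$, where $\underline{y}_{\underline{s}}$ is the vector of responses of the units in $\underline{s}$ (so the selection probability depends on $\underline{\theta}$ only through the responses of the sampled units; for a conventional design it does not depend on $\underline{\theta}$ at all). The observed data is $D_0=d_0=(\Lambda_{k,j},((i,y_i): i\in\underline{s}))$, so that $P_{\underline{\theta}}(D_0=d_0)=P(\Lambda_{k,j})\,P(\underline{s}\mid \underline{y}_{\underline{s}},\delta_k)\,I[\underline{\theta}\text{ is consistent with } d_0]$. Let $D_R=r_d(D_0)=\{(i,y_i): i\in s\}$ be the reduced data, where $s$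 is the unordered set of distinct labels appearing in $\underline{s}$. Then $D_R$ is a minimal sufficient statistic for $\underline{\theta}$.
   Context: A parameter vector $\underline{\theta}=(y_1,\dots,y_N)$ is consistent with data $d_R=\{(i,y_i'): i\in s\}$ (or with $d_0$) if for every sampled label $i$ the recorded response equals the $i$-th component of $\underline{\theta}$; $\Theta_{d_R}$ denotes the set of such $\underline{\theta}$. The strategy selected is recorded as part of the observed data $d_0$. Minimal sufficiency is in the usual sense for the family of distributions of $D_0$ indexed by $\underline{\theta}\in\mathbb{R}^N$. *)

(* Defs.v *)
From HB Require Import structures.
From mathcomp Require Import all_boot all_order all_algebra.
From mathcomp Require Import all_classical all_reals.
From mathcomp Require Import esum.
Set Implicit Arguments. Unset Strict Implicit. Unset Printing Implicit Defensive.
Import Order.TTheory GRing.Theory Num.Theory.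
Local Open Scope classical_set_scope.
Local Open Scope ring_scope.

(* A family of discrete distributions of a random datum X (values in the
   choiceType X) indexed by Theta, given by its probability mass function
   f th x = P_th(X = x). *)
Section Stat.
Variables (R : realType) (Theta : Type) (X : choiceType) (f : Theta -> X -> R).

Definition Prob (th : Theta) (A : set X) : \bar R := \esum_(x in A) (f th x)%:E.

Definition in_support (x : X) : Prop := exists th, f th x <> 0.

(* T is sufficient (usual sense, discrete case): the conditional distribution
   P_th(X = x | T(X) = T(x)) does not depend on th, i.e. equals some k(x)
   for every th with P_th(T(X) = T(x)) > 0. *)
Definition sufficient (Y : Type) (T : X -> Y) : Prop :=
  exists k : X -> R, forall th x,
    Prob th [set x' | T x' = T x] != 0%E ->
    (f th x)%:E = ((k x)%:E * Prob th [set x' | T x' = T x])%E.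

Definition minimal_sufficient (Y : Type) (T : X -> Y) : Prop :=
  sufficient T /\
  forall (Z : Type) (U : X -> Z), sufficient U ->
    exists g : Z -> Y, forall x, in_support x -> T x = g (U x).
End Stat.

(* strategies Lambda_{k,j}: k : 'I_T indexes the design delta_k,
   j : 'I_(V k) indexes the estimator phi_{k,j} *)
Definition strategy (T : nat) (V : 'I_T -> nat) := {k : 'I_T & 'I_(V k)}.

Definition design_of (T : nat) (V : 'I_T -> nat) (l : strategy V) : 'I_T := tag l.

Definition consistent (R : realType) (N : nat) (th : 'I_N -> R)
  (d : seq ('I_N * R)) : bool := all (fun z => z.2 == th z.1) d.

(* the observed data D_0 = (Lambda_{k,j}, ((i, y_i) : i in ordered sample)) *)
Definition obs_data (R : realType) (N T : nat) (V : 'I_T -> nat) :=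
  (strategy V * seq ('I_N * R))%type.

Definition D0pmf (R : realType) (N T : nat) (V : 'I_T -> nat)
  (PL : strategy V -> R) (p : ('I_N -> R) -> strategy V -> seq 'I_N -> R)
  (th : 'I_N -> R) (d0 : obs_data R N V) : R :=
  PL d0.1 * p th d0.1 (map fst d0.2) * (consistent th d0.2)%:R.

(* reduced data D_R = r_d(D_0) = {(i, y_i) : i in s}, s the set of distinct
   labels of the ordered sample (the strategy and the order/multiplicity
   are dropped) *)
Definition reduce (R : realType) (N T : nat) (V : 'I_T -> nat)
  (d0 : obs_data R N V) : set ('I_N * R) := [set z | z \in d0.2].

(* Main.v *)
Require Import Defs.
From HB Require Import structures.
From mathcomp Require Import all_boot all_order all_algebra.
From mathcomp Require Import all_classical all_reals.
From mathcomp Require Import esum ereal lra.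
Import Order.TTheory GRing.Theory Num.Theory.
Local Open Scope classical_set_scope.
Local Open Scope ring_scope.
Lemma cons_map (R : realType) (N : nat) (th : 'I_N -> R) (d : seq ('I_N * R)) :
  consistent th d -> [seq (i, th i) | i <- map fst d] = d.
Proof. by elim: d => //= -[i y] d IH /andP[/eqP /= -> /IH ->]. Qed.

Lemma cons_mapT (R : realType) (N : nat) (th : 'I_N -> R) (s : seq 'I_N) :
  consistent th [seq (i, th i) | i <- s].
Proof. by elim: s => //= i s ->; rewrite eqxx. Qed.

Lemma map_fst_map (R : realType) (N : nat) (th : 'I_N -> R) (s : seq 'I_N) :
  map fst [seq (i, th i) | i <- s] = s.
Proof. by elim: s => //= i s ->. Qed.

Lemma reduce_eqi (R : realType) (N T : nat) (V : 'I_T -> nat) (x x' : obs_data R N V) :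
  reduce x = reduce x' -> x.2 =i x'.2.
Proof.
move=> e z; have := congr1 (fun S => S z) e; rewrite /reduce /= => h.
by apply/idP/idP => H; [rewrite -h | rewrite h].
Qed.

Lemma reduce_cons (R : realType) (N T : nat) (V : 'I_T -> nat) (x x' : obs_data R N V) th :
  reduce x = reduce x' -> consistent th x.2 = consistent th x'.2.
Proof. by move=> /reduce_eqi e; apply: eq_all_r. Qed.
Theorem mainTheorem1 (R : realType) (N T : nat) (V : 'I_T -> nat)
  (PL : strategy V -> R)
  (PL_ge0 : forall l, 0 <= PL l) (PL_sum1 : \sum_(l : strategy V) PL l = 1)
  (p : ('I_N -> R) -> strategy V -> seq 'I_N -> R)
  (p_ge0 : forall th l s, 0 <= p th l s)
  (p_sum1 : forall th l, (\esum_(s in [set: seq 'I_N]) (p th l s)%:E = 1)%E)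
  (q : 'I_T -> seq ('I_N * R) -> R)
  (hii : forall th l s, p th l s = q (design_of l) [seq (i, th i) | i <- s]) :
  minimal_sufficient (D0pmf PL p) (@reduce R N T V).
Proof.
set f := D0pmf PL p.
have fE : forall th (x : obs_data R N V), f th x =
    if consistent th x.2 then PL x.1 * q (design_of x.1) x.2 else 0.
  move=> th [l d]; rewrite /f /D0pmf /=; case: ifP => c; last by rewrite mulr0.
  by rewrite mulr1 hii cons_map.
have f_ge0 : forall th x, 0 <= f th x.
  move=> th x; rewrite /f /D0pmf; apply: mulr_ge0; first exact: mulr_ge0.
  by case: consistent.
have PLle1 : forall l, PL l <= 1.
  by move=> l; rewrite -PL_sum1 (bigD1 l) //= lerDl sumr_ge0.
have Pfin : forall (th : 'I_N -> R) (A : set (obs_data R N V)), (Prob f th A < +oo)%E.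
  move=> th A.
  apply: (@le_lt_trans _ _ (Prob f th setT)).
    rewrite /Prob [X in (X <= _)%E]esum_mkcond; apply: le_esum => x _.
    by case: ifP => _ //; rewrite lee_fin f_ge0.
  pose g := fun z : strategy V * seq 'I_N =>
    ((z.1, [seq (i, th i) | i <- z.2]) : obs_data R N V).
  rewrite /Prob (esumID (range g)); last by move=> x _; rewrite lee_fin.
  rewrite [X in (_ + X)%E]esum1 ?adde0; last first.
    move=> [l d] [_ /= nr]; rewrite fE /=; case: ifP => c //; exfalso; apply: nr.
    by exists (l, map fst d) => //; rewrite /g /= cons_map.
  rewrite setTI esum_image; last first.
    move=> [l s] [l' s'] _ _ [-> e].
    by rewrite -(@map_fst_map R N th s) e map_fst_map.
  apply: (@le_lt_trans _ _ (\esum_(z in [set: strategy V * seq 'I_N]) (p th z.1 z.2)%:E)).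
    apply: le_esum => -[l s] _; rewrite fE /= cons_mapT lee_fin -hii.
    by rewrite ler_piMl.
  have -> : [set: strategy V * seq 'I_N] = [set: strategy V] `*`` (fun=> [set: seq 'I_N]).
    by apply/seteqP; split.
  rewrite -(esum_esum (a := fun l s => (p th l s)%:E)); last by move=> *; rewrite lee_fin.
  under eq_esum do rewrite p_sum1.
  rewrite esum_fset; last by move=> *; rewrite lee01.
    by rewrite ereal.fsumEFin ?ltry //; exact: finite_finset.
  exact: finite_finset.
have Pge0 : forall (th : 'I_N -> R) (A : set (obs_data R N V)), (0 <= Prob f th A)%E.
  by move=> th A; apply: esum_ge0 => x _; rewrite lee_fin.
have Pge : forall th (A : set (obs_data R N V)) x, A x -> ((f th x)%:E <= Prob f th A)%E.
  move=> th A x Ax; apply: esum_ge; exists [set x].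
    by split; [exact: finite_set1 | move=> y ->].
  by rewrite fsbig_set1.
have Pne0 : forall th (A : set (obs_data R N V)) x, A x -> f th x != 0 -> Prob f th A != 0%E.
  move=> th A x Ax fx; apply/eqP => P0; move/eqP: fx; apply.
  have := Pge th A x Ax; rewrite P0 => le; apply/le_anti; rewrite f_ge0 andbT.
  by rewrite -lee_fin.
have Pcons : forall (th : 'I_N -> R) (x : obs_data R N V), Prob f th [set x' | reduce x' = reduce x] != 0%E ->
    consistent th x.2.
  move=> th x hP; apply/negPn/negP => nc; move/eqP: hP; apply; apply: esum1 => x' /= e.
  by rewrite fE (@reduce_cons _ _ _ _ _ _ th e) (negbTE nc).
split.
  pose cls (x : obs_data R N V) := [set x' : obs_data R N V | reduce x' = reduce x].
  exists (fun x => match pselect (exists th, Prob f th (cls x) != 0%E) with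
     | left h => f (proj1_sig (cid h)) x / fine (Prob f (proj1_sig (cid h)) (cls x))
     | right _ => 0 end).
  move=> th x hP.
  case: pselect => [h|nh]; last by exfalso; apply nh; exists th.
  case: (cid h) => th' hP' /=.
  have c := Pcons th x hP; have c' := Pcons th' x hP'.
  have eqf : forall x', cls x x' -> f th' x' = f th x'.
    by move=> x' e; rewrite !fE !(@reduce_cons _ _ _ _ x' x _ e) c c'.
  have eqP' : Prob f th' (cls x) = Prob f th (cls x).
    by apply: eq_esum => x' /eqf ->.
  rewrite eqP' eqf //.
  have Pf : Prob f th (cls x) \is a fin_num by rewrite ge0_fin_numE ?Pfin ?Pge0.
  have PE : Prob f th (cls x) = (fine (Prob f th (cls x)))%:E by rewrite fineK.
  have hf : fine (Prob f th (cls x)) != 0 by move: hP; rewrite PE eqe.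
  by rewrite [X in (_ * X)%E]PE -EFinM divfK.
move=> Z U [kU hU].
have claimA : forall (th : 'I_N -> R) (x x' : obs_data R N V), consistent th x.2 -> f th x != 0 ->
    in_support f x' -> U x' = U x -> consistent th x'.2.
  move=> th x x' c fx [th1 f1] eU.
  have P0 : Prob f th [set y | U y = U x'] != 0%E.
    by apply: (Pne0 _ _ x) => //=; rewrite eU.
  have P1 : Prob f th1 [set y | U y = U x'] != 0%E.
    by apply: (Pne0 _ _ x') => //; apply/eqP.
  have k0 : kU x' != 0.
    apply/eqP => k0; move: (hU th1 x' P1); rewrite k0 mul0e => /eqP.
    by rewrite eqe => /eqP.
  have e := hU th x' P0.
  case c' : (consistent th x'.2) => //.
  move: e; rewrite fE c' => /esym/eqP; rewrite mule_eq0 eqe.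
  by rewrite (negbTE k0) (negbTE P0).
have key : forall x x' : obs_data R N V, in_support f x -> in_support f x' -> U x = U x' ->
    forall z, z \in x'.2 -> z \in x.2.
  move=> x x' [th0 f0] sx' eU [i y] zin.
  have c0 : consistent th0 x.2.
    by move: f0; rewrite fE; case: ifP.
  pose th := fun j => if (j == i) && (i \notin map fst x.2) then y + 1 else th0 j.
  have c : consistent th x.2.
    apply/allP => -[j w] jin /=; move/allP: c0 => /(_ _ jin) /= /eqP ->.
    rewrite /th; case: (boolP ((j == i) && _)) => // /andP[/eqP ji].
    by rewrite -ji => /negP; case; apply/mapP; exists (j, w).
  have fx : f th x != 0.
    by apply/eqP; rewrite fE c; move: f0; rewrite fE c0.
  have := claimA th x x' c fx sx' (esym eU).
  move=> /allP /(_ _ zin) /= /eqP; rewrite /th eqxx /=.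
  case: (boolP (i \in map fst x.2)) => hi /=.
    move=> ->; move/mapP: hi => [[j w] jin /= ->].
    by move/allP: c0 => /(_ _ jin) /= /eqP <-.
  by move=> h; exfalso; lra.
pose g := fun z => match pselect (exists x, in_support f x /\ U x = z) with
  | left h => reduce (proj1_sig (cid h)) | right _ => set0 end.
exists g => x sx; rewrite /g; case: pselect => [h|nh]; last first.
  by exfalso; apply: nh; exists x.
case: (cid h) => x'' [sx'' e] /=.
rewrite /reduce; apply/seteqP; split => z /=.
  exact: (key x'' x sx'' sx e).
exact: (key x x'' sx sx'' (esym e)).
Qed.
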